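(* Let $m\in\mathbb{N}$, $r\in\{1,\dots,m\}$, and let $v$ be a vertex of $D_m$ of generation number $r$. Then the set $\{x\in V(D_m): d_{D_m}(x,v)\le 2^{r-1}\}$ is contained in a subdiamond of $D_m$ of height $2^r$.
   Context: Diamonds: $D_0$ is an edge; $D_i$ is obtained from $D_{i-1}$ by replacing each edge $uv$ by a quadrilateral $u,a,v,b$; $D_m$ has the shortest path metric with unit edges. Generation number $r$ ($1\le r\le m$) consists of the vertices of $D_{m-r+1}$ not belonging to $D_{m-r}$ (so generation $1$ are the vertices added in the last step; the two vertices of $D_0$ belong to no generation). A subdiamond of $D_m$ is the set of vertices that evolved from a single edge $e$ of some $D_j$, $0\le j\le m$, including the endpoints of $e$ (its top and bottom); its height is the distance between top and bottom, $2^{m-j}$. *)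

(* Defs.v *)
From mathcomp Require Import all_boot.
Set Implicit Arguments. Unset Strict Implicit. Unset Printing Implicit Defensive.

(* Vertices: [inl false] = bottom of D_0, [inl true] = top of D_0,
   [inr (s, c)] = the c-th new vertex (c : bool, i.e. "a" or "b") created when
   the edge with address s of D_(size s) is replaced by a quadrilateral. *)
Definition dvert := (bool + (seq (bool * bool) * bool))%type.

(* Edge addresses: an edge of D_j is a sequence of j pairs (c, h): at each
   step, the edge u--w (oriented bottom to top) is replaced by u,a,w,b; the
   pair (c, h) selects the new vertex (a if c = false, b if c = true) and the
   half (h = false: u--new, h = true: new--w). *)
Fixpoint dends_aux (u w : dvert) (pre s : seq (bool * bool)) : dvert * dvert :=
  match s with
  | [::] => (u, w)
  | (c, h) :: t =>
      let n : dvert := inr (pre, c) in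
      if h then dends_aux n w (rcons pre (c, h)) t
      else dends_aux u n (rcons pre (c, h)) t
  end.

Definition dends (e : seq (bool * bool)) : dvert * dvert :=
  dends_aux (inl false) (inl true) [::] e.

(* x is a vertex of D_j (every vertex of D_j is an endpoint of an edge of D_j) *)
Definition is_dvertex (j : nat) (x : dvert) : Prop :=
  exists e, size e = j /\ (x = (dends e).1 \/ x = (dends e).2).

Definition dadj (m : nat) (x y : dvert) : Prop :=
  exists e, size e = m /\ (dends e = (x, y) \/ dends e = (y, x)).

Inductive dwalk (m : nat) : dvert -> dvert -> nat -> Prop :=
  | dwalk0 x : dwalk m x x 0
  | dwalkS x y z n : dadj m x y -> dwalk m y z n -> dwalk m x z n.+1.

Definition ddist_le (m : nat) (x y : dvert) (k : nat) : Prop :=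
  exists2 n, n <= k & dwalk m x y n.

Definition dgeneration (m r : nat) (v : dvert) : Prop :=
  is_dvertex (m - r + 1) v /\ ~ is_dvertex (m - r) v.

(* vertices of D_m evolved from the edge with address e (an edge of D_(size e)),
   including its endpoints *)
Definition subdiamond (m : nat) (e : seq (bool * bool)) (x : dvert) : Prop :=
  exists t, size (e ++ t) = m /\
            (x = (dends (e ++ t)).1 \/ x = (dends (e ++ t)).2).

Definition subdiamond_height (m : nat) (e : seq (bool * bool)) : nat :=
  2 ^ (m - size e).

(* Main.v *)
Require Import Defs.
From mathcomp Require Import all_boot.
From mathcomp Require Import zify.

Lemma dends_aux_cat s1 s2 u w pre :
  dends_aux u w pre (s1 ++ s2) =
  dends_aux (dends_aux u w pre s1).1 (dends_aux u w pre s1).2 (pre ++ s1) s2.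
Proof.
elim: s1 u w pre => [|[c h] t IH] u w pre /=; first by rewrite cats0.
by case: h; rewrite IH cat_rcons.
Qed.

Lemma nseq_top k u w pre : (dends_aux u w pre (nseq k (false, true))).2 = w.
Proof. by elim: k u w pre => //= k IH u w pre; apply: IH. Qed.

Lemma nseq_bot k u w pre : (dends_aux u w pre (nseq k (false, false))).1 = u.
Proof. by elim: k u w pre => //= k IH u w pre; apply: IH. Qed.

Lemma top_new q c k : (dends (q ++ (c, false) :: nseq k (false, true))).2 = inr (q, c).
Proof. by rewrite /dends dends_aux_cat /= nseq_top. Qed.

Lemma ends_aux s u w pre x :
  (x = (dends_aux u w pre s).1 \/ x = (dends_aux u w pre s).2) ->
  x = u \/ x = w \/ exists q c h t, s = q ++ (c, h) :: t /\ x = inr (pre ++ q, c).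
Proof.
elim: s u w pre => [|[c h] t IH] u w pre /=; first by case=> ->; auto.
case: h => Hx; have [->|[->|[q [c' [h' [t' [-> ->]]]]]]] := IH _ _ _ Hx.
- by right; right; exists [::], c, true, t; rewrite cats0.
- by right; left.
- by right; right; exists ((c, true) :: q), c', h', t'; rewrite cat_rcons.
- by left.
- by right; right; exists [::], c, false, t; rewrite cats0.
- by right; right; exists ((c, false) :: q), c', h', t'; rewrite cat_rcons.
Qed.

Arguments ends_aux {s u w pre x}.

Fixpoint Bh (k : nat) (s : seq (bool * bool)) : nat :=
  match s with [::] => 0 | p :: t => p.2 * 2 ^ k.-1 + Bh k.-1 t end.

Lemma Bh_rcons s k x : Bh k (rcons s x) = Bh k s + x.2 * 2 ^ (k - size s).-1.
Proof.
elim: s k => [|y s IH] k /=; first by rewrite subn0 addn0.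
rewrite IH addnA; have -> : k.-1 - size s = k - (size s).+1 by lia. by [].
Qed.

Definition Hh (m : nat) (x : dvert) : nat :=
  match x with inl b => if b then 2 ^ m else 0 | inr (p, c) => Bh m (rcons p (c, true)) end.

Lemma height_aux m s pre u w :
  size pre + size s <= m -> Hh m u = Bh m pre -> Hh m w = Bh m pre + 2 ^ (m - size pre) ->
  Hh m (dends_aux u w pre s).1 = Bh m (pre ++ s) /\
  Hh m (dends_aux u w pre s).2 = Bh m (pre ++ s) + 2 ^ (m - size (pre ++ s)).
Proof.
elim: s pre u w => [|[c h] t IH] pre u w Hs Hu Hw /=; first by rewrite cats0.
rewrite -cat_rcons.
move: Hs => /= Hs.
case E: (m - size pre) => [|K]; first by lia.
have Hn : Hh m (inr (pre, c)) = Bh m pre + 2 ^ K by rewrite /= Bh_rcons E /= mul1n.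
case: h => /=.
- apply: IH; rewrite ?size_rcons //; first by lia.
  rewrite Bh_rcons E /= Hw E expnS.
  have -> : m - (size pre).+1 = K by lia. lia.
- apply: IH; rewrite ?size_rcons //; first by lia.
  + by rewrite Bh_rcons /= mul0n addn0.
  + rewrite Hn Bh_rcons /= mul0n addn0. have -> : m - (size pre).+1 = K by lia. by [].
Qed.

Lemma height_dends m e : size e <= m ->
  Hh m (dends e).1 = Bh m e /\ Hh m (dends e).2 = Bh m e + 2 ^ (m - size e).
Proof. move=> He; apply: height_aux => //=; by rewrite subn0. Qed.

Lemma cutv q t e x :
  (x = (dends (q ++ t)).1 \/ x = (dends (q ++ t)).2) ->
  (x = (dends e).1 \/ x = (dends e).2) -> take (size q) e != q ->
  x = (dends q).1 \/ x = (dends q).2.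
Proof.
move=> Hx1 Hx2 Hne; rewrite /dends dends_aux_cat in Hx1.
case: (ends_aux Hx1) => [->|[->|[q1 [c1 [h1 [t1 [_ Ex]]]]]]]; [by left|by right|].
exfalso; rewrite /dends in Hx2.
case: (ends_aux Hx2) => [E|[E|[q2 [c2 [h2 [t2 [Ee E]]]]]]]; rewrite Ex in E; try discriminate.
case: E => Eq _; move: Hne; rewrite Ee -Eq /= -catA take_size_cat // eqxx //.
Qed.

Lemma walk_in m r q c : 1 <= r <= m -> size q = m - r ->
  forall n x z, dwalk m x z n -> z = inr (q, c) -> n <= 2 ^ r.-1 ->
  subdiamond m q x /\ Hh m (inr (q, c)) <= Hh m x + n /\ Hh m x <= Hh m (inr (q, c)) + n.
Proof.
move=> /andP[r1 rm] Hq.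
have Hv : Hh m (inr (q, c)) = Bh m q + 2 ^ r.-1.
  rewrite /= Bh_rcons Hq /=. have -> : m - (m - r) = r by lia. by rewrite mul1n.
have H2r : 2 ^ r = 2 * 2 ^ r.-1 by case: r r1 {Hv Hq rm} => // r' _; rewrite expnS.
have [Hq1 Hq2] := height_dends m q ltac:(lia).
rewrite Hq (_ : m - (m - r) = r) in Hq2; last by lia.
move=> n x z; elim => [y|x' y z' n' Hadj Hw IH] Ez Hn; subst.
- split; last by lia.
  exists ((c, false) :: nseq r.-1 (false, true)); split.
    by rewrite size_cat /= size_nseq; lia.
  by right; rewrite top_new.
- have [Hs [H1 H2]] := IH erefl (ltnW Hn).
  case: Hadj => e [He Hxy].
  have [Hh1 Hh2] := height_dends m e ltac:(lia).
  rewrite He subnn expn0 in Hh2.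
  have [Hxe [Hye Hd]] : (x' = (dends e).1 \/ x' = (dends e).2) /\
     (y = (dends e).1 \/ y = (dends e).2) /\ (Hh m x' + 1 = Hh m y \/ Hh m y + 1 = Hh m x').
    by case: Hxy => Hd; rewrite Hd /= in Hh1 Hh2 *; rewrite Hh1 Hh2; auto.
  case: (boolP (take (size q) e == q)) => [/eqP Ht | Hnt].
  + have Ee : q ++ drop (size q) e = e by rewrite -{1}Ht cat_take_drop.
    split; last by lia.
    by exists (drop (size q) e); rewrite Ee.
  + exfalso; case: Hs => t [_ Hyt].
    case: (cutv q t e y Hyt Hye Hnt) => Ey; rewrite Ey ?Hq1 ?Hq2 Hv in H1 H2; lia.
Qed.

Theorem mainTheorem9 (m r : nat) (v : dvert) :
  1 <= r <= m ->
  dgeneration m r v ->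
  exists e : seq (bool * bool),
    size e <= m /\ subdiamond_height m e = 2 ^ r /\
    (forall x : dvert, is_dvertex m x -> ddist_le m x v (2 ^ r.-1) ->
       subdiamond m e x).
Proof.
move=> Hr [[e [He Hv]] Hnot]; have /andP[r1 rm] := Hr.
rewrite /dends in Hv.
case: (ends_aux Hv) => [E|[E|[q [c [h [t [Ee E]]]]]]].
- exfalso; apply: Hnot; exists (nseq (m - r) (false, false)); split.
    by rewrite size_nseq.
  by left; rewrite E /dends nseq_bot.
- exfalso; apply: Hnot; exists (nseq (m - r) (false, true)); split.
    by rewrite size_nseq.
  by right; rewrite E /dends nseq_top.
- rewrite /= in E; rewrite Ee size_cat /= in He.
  have Hq : size q = m - r.
    case: (ltngtP (size q) (m - r)) => // Hlt; last by lia.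
    exfalso; apply: Hnot.
    exists (q ++ (c, false) :: nseq (m - r - size q - 1) (false, true)); split.
      by rewrite size_cat /= size_nseq; lia.
    by right; rewrite top_new E.
  exists q; split; first by lia.
  split; first by rewrite /subdiamond_height Hq; congr (2 ^ _); lia.
  move=> x _ [n Hn Hw].
  by have [] := walk_in m r q c Hr Hq n x v Hw E Hn.
Qed.
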